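(* For a generic real $6\times 6$ skew-Hamiltonian matrix $A$ (i.e. for $A$ outside a proper algebraic subset of the space of skew-Hamiltonian matrices), the real vector space of homogeneous polynomials $H$ of degree $3$ in $x_1,\dots,x_6$ satisfying the system of second-order PDEs $A\,\nabla^2H(x)=\nabla^2H(x)\,A^{\rm T}$ (for all $x\in\mathbb R^6$) has dimension $12$.
   Context: $J=\begin{pmatrix}0&I_3\\-I_3&0\end{pmatrix}$. A real $6\times6$ matrix $A$ is skew-Hamiltonian if $A^{\rm T}J=JA$; such matrices form a 15-dimensional vector space. $\nabla^2 H$ denotes the Hesse matrix of $H$. *)

(* Defs.v *)
From HB Require Import structures.
From mathcomp Require Import all_boot all_order all_algebra.
Set Implicit Arguments. Unset Strict Implicit. Unset Printing Implicit Defensive.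
Import Order.TTheory GRing.Theory Num.Theory.
Local Open Scope ring_scope.

(* The symplectic matrix J = [[0, I_3], [-I_3, 0]] of size 6. *)
Definition Jmx (R : pzRingType) : 'M[R]_6 :=
  \matrix_(i < 6, j < 6)
    (if (i < 3)%N && (val j == (val i + 3)%N) then 1
     else if (3 <= i)%N && ((val j + 3)%N == val i) then -1 else 0).

Definition skew_hamiltonian (R : pzRingType) (A : 'M[R]_6) : Prop :=
  A^T *m Jmx R = Jmx R *m A.

(* Monomials in x_1..x_6 with each exponent <= 3 (enough for degree-3 forms):
   an exponent vector m, representing prod_i x_i^(m i). *)
Definition mon := {ffun 'I_6 -> 'I_4}.

(* Polynomials in x_1..x_6 whose partial degrees are <= 3, given by their
   coefficient function on monomials. *)
Definition poly6 (R : pzRingType) : lmodType R := {ffun mon -> R^o}.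

Definition mon_deg (m : mon) : nat := (\sum_(i < 6) (m i : nat))%N.

(* H is homogeneous of degree 3 (every polynomial that is homogeneous of
   degree 3 has all partial degrees <= 3, so is representable in poly6). *)
Definition homog3 (R : pzRingType) (H : poly6 R) : Prop :=
  forall m : mon, mon_deg m != 3%N -> H m = 0.

(* m + e_i (exponent of x_i raised by one; only used when m i < 3). *)
Definition mon_inc (m : mon) (i : 'I_6) : mon :=
  [ffun j => if j == i then inord (m i).+1 else m j].

Definition pderiv (R : pzRingType) (i : 'I_6) (H : poly6 R) : poly6 R :=
  [ffun m : mon => if ((m i : nat) < 3)%N
                   then H (mon_inc m i) *+ (m i).+1 else 0].

Definition peval (R : comPzRingType) (H : poly6 R) (x : 'I_6 -> R) : R :=
  \sum_(m : mon) H m * \prod_(i < 6) x i ^+ (m i).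

Definition hesse (R : comPzRingType) (H : poly6 R) (x : 'I_6 -> R) : 'M[R]_6 :=
  \matrix_(i < 6, j < 6) peval (pderiv i (pderiv j H)) x.

Definition sol_space (R : comPzRingType) (A : 'M[R]_6) (H : poly6 R) : Prop :=
  homog3 H /\ forall x : 'I_6 -> R, A *m hesse H x = hesse H x *m A^T.

Definition has_dim (R : pzRingType) (V : lmodType R) (S : V -> Prop) (d : nat) : Prop :=
  exists b : 'I_d -> V,
    (forall c : 'I_d -> R, \sum_(k < d) c k *: b k = 0 -> forall k, c k = 0) /\
    (forall v : V, S v <-> exists c : 'I_d -> R, v = \sum_(k < d) c k *: b k).

(* Polynomials in the 36 entries of a 6x6 matrix, as a finite list of terms
   (coefficient, exponent of each entry). *)
Definition mxpoly36 (R : pzRingType) := seq (R * ('I_6 -> 'I_6 -> nat)).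

Definition mxpeval (R : comPzRingType) (P : mxpoly36 R) (A : 'M[R]_6) : R :=
  \sum_(t <- P) t.1 * \prod_(i < 6) \prod_(j < 6) A i j ^+ (t.2 i j).

(* Main.v *)
Require Import Defs.
From HB Require Import structures.
From mathcomp Require Import all_boot all_order all_algebra all_fingroup ring zify.
Set Implicit Arguments. Unset Strict Implicit. Unset Printing Implicit Defensive.
Import Order.TTheory GRing.Theory Num.Theory.
Local Open Scope ring_scope.

Definition m0 : mon := [ffun _ => ord0].
Definition unitm (k : 'I_6) : mon := mon_inc m0 k.
Definition inc3 (i j k : 'I_6) : mon := mon_inc (mon_inc (unitm k) i) j.
Definition nf (i j k : 'I_6) : nat :=
  ((mon_inc (unitm k) i j : nat).+1 * (unitm k i : nat).+1)%N.

Definition I6 := iota 0 6.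
Definition e3n (a b c l : nat) : nat := ((l == c) + (l == a) + (l == b))%N.
Definition eqn3 a b c i j k := all (fun l => e3n a b c l == e3n i j k l) I6.
Definition nfn (i j k : nat) : nat := (((j == k) + (j == i)).+1 * (i == k).+1)%N.
Definition permn (a b c i j k : nat) : bool :=
  [|| (i == a) && (j == b) && (k == c), (i == a) && (j == c) && (k == b),
       (i == b) && (j == a) && (k == c), (i == b) && (j == c) && (k == a),
       (i == c) && (j == a) && (k == b) | (i == c) && (j == b) && (k == a)].

Lemma c_cnt : all (fun a => all (fun b => all (fun c =>
  sumn [seq sumn [seq sumn [seq (eqn3 a b c i j k * nfn a b c)%N | k <- I6] | j <- I6] | i <- I6] == 6%N)
  I6) I6) I6.
Proof. by vm_compute. Qed.
Lemma c_perm : all (fun a => all (fun b => all (fun c => all (fun i => all (fun j => all (fun k =>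
  eqn3 a b c i j k ==> permn a b c i j k) I6) I6) I6) I6) I6) I6.
Proof. by vm_compute. Qed.
Lemma c_nf : all (fun a => all (fun b => all (fun c =>
  (nfn a b c == nfn b a c) && (nfn a b c == nfn a c b)) I6) I6) I6.
Proof. by vm_compute. Qed.

Lemma allI6 (P : nat -> bool) : all P I6 -> forall i : 'I_6, P i.
Proof. by move=> /allP H i; apply: H; rewrite mem_iota /= ltn_ord. Qed.

Lemma sum6 (F : nat -> nat) : (\sum_(i < 6) F i)%N = sumn [seq F i | i <- I6].
Proof. by rewrite sumnE big_map -(big_mkord xpredT). Qed.

Lemma mon_inc_val (m : mon) i j : (m i < 3)%N -> (mon_inc m i j : nat) = (m j + (j == i))%N.
Proof.
move=> h; rewrite ffunE; case: eqP => [->|_]; last by rewrite addn0.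
by rewrite inordK ?addn1 // ltnS.
Qed.

Lemma m0_val j : (m0 j : nat) = 0%N. Proof. by rewrite ffunE. Qed.

Lemma unitm_val k l : (unitm k l : nat) = (l == k) :> nat.
Proof. by rewrite mon_inc_val ?m0_val. Qed.

Lemma incu_val k i l : (mon_inc (unitm k) i l : nat) = ((l == k) + (l == i))%N.
Proof. by rewrite mon_inc_val ?unitm_val //; case: (i == k). Qed.

Lemma inc3_val i j k l : (inc3 i j k l : nat) = e3n i j k l.
Proof.
rewrite /inc3 mon_inc_val ?incu_val //.
by case: (j == k); case: (j == i).
Qed.

Lemma nf_val i j k : nf i j k = nfn i j k.
Proof. by rewrite /nf incu_val unitm_val. Qed.

Lemma inc3_eqE a b c i j k : (inc3 a b c == inc3 i j k) = eqn3 a b c i j k.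
Proof.
apply/eqP/allP.
  move=> E l; rewrite mem_iota /= => hl.
  have := congr1 (fun m : mon => nat_of_ord (m (Ordinal hl))) E.
  by rewrite /= !inc3_val => ->.
move=> H; apply/ffunP => l; apply/val_inj; rewrite /= !inc3_val; apply/eqP/H.
by rewrite mem_iota /= ltn_ord.
Qed.

Lemma perm6 (A : Type) (F : 'I_6 -> 'I_6 -> 'I_6 -> A) :
  (forall i j k, F i j k = F j i k /\ F i j k = F i k j) ->
  forall a b c i j k, inc3 a b c = inc3 i j k -> F i j k = F a b c.
Proof.
move=> S a b c i j k /eqP; rewrite inc3_eqE => E.
have := allI6 c_perm a; move=> /(allI6)/(_ b)/allI6/(_ c)/allI6/(_ i)/allI6/(_ j)/allI6/(_ k).
rewrite E /= /permn.
have e (x y : 'I_6) : (x == y :> nat) -> x = y by move=> /eqP/val_inj.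
have s12 x y z : F x y z = F y x z by case: (S x y z).
have s23 x y z : F x y z = F x z y by case: (S x y z).
case/orP=> [H|/orP[H|/orP[H|/orP[H|/orP[H|H]]]]]; move/andP: H => [/andP[/e-> /e->] /e->].
- by [].
- by rewrite s23.
- by rewrite s12.
- by rewrite s23 s12.
- by rewrite s12 s23.
- by rewrite s12 s23 s12.
Qed.

Section Bridge.
Variable R : realFieldType.

Definition Tt (H : poly6 R) (i j k : 'I_6) : R := pderiv i (pderiv j H) (unitm k).

Lemma TtE H i j k : Tt H i j k = H (inc3 i j k) *+ nf i j k.
Proof.
have h1 : (unitm k i < 3)%N by rewrite unitm_val; case: (i == k).
have h2 : (mon_inc (unitm k) i j < 3)%N.
  by rewrite incu_val; case: (j == k); case: (j == i).
by rewrite /Tt ffunE h1 ffunE h2 -mulrnA.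
Qed.

Lemma coefE n (c : 'I_n -> R) (H : 'I_n -> poly6 R) m :
  (\sum_(l < n) c l *: H l) m = \sum_(l < n) c l * H l m.
Proof. by rewrite sum_ffunE; apply: eq_bigr => l _; rewrite ffunE. Qed.

Lemma Tt_sum n (c : 'I_n -> R) (H : 'I_n -> poly6 R) i j k :
  Tt (\sum_(l < n) c l *: H l) i j k = \sum_(l < n) c l * Tt (H l) i j k.
Proof.
rewrite TtE coefE -sumrMnl; apply: eq_bigr => l _.
by rewrite TtE mulrnAr.
Qed.

Lemma Tt_sub H G i j k : Tt (H - G) i j k = Tt H i j k - Tt G i j k.
Proof. by rewrite !TtE !ffunE mulrnBl. Qed.

Definition symT (T : 'I_6 -> 'I_6 -> 'I_6 -> R) :=
  forall i j k, T i j k = T j i k /\ T i j k = T i k j.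

Lemma nf_sym : forall i j k, nf i j k = nf j i k /\ nf i j k = nf i k j.
Proof.
move=> i j k; rewrite !nf_val.
have := allI6 c_nf i => /allI6/(_ j)/allI6/(_ k)/andP[/eqP-> /eqP->]; by [].
Qed.

Lemma inc3_sym i j k : inc3 i j k = inc3 j i k /\ inc3 i j k = inc3 i k j.
Proof.
split; apply/ffunP => l; apply/val_inj; rewrite /= !inc3_val /e3n.
  by rewrite addnAC.
by rewrite -addnA addnC (addnC (l == i)).
Qed.

Lemma Tt_sym H : symT (Tt H).
Proof.
move=> i j k; rewrite !TtE.
by case: (inc3_sym i j k) => <- <-; case: (nf_sym i j k) => <- <-.
Qed.


Lemma mon_deg_inc (m : mon) i : (m i < 3)%N -> mon_deg (mon_inc m i) = (mon_deg m).+1.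
Proof.
move=> h; rewrite /mon_deg; under eq_bigr do rewrite mon_inc_val //.
rewrite big_split /=.
have -> : (\sum_(l < 6) (l == i))%N = 1%N.
  by rewrite (bigD1 i) //= eqxx big1 // => l /negPf ->.
by rewrite addn1.
Qed.

Lemma mon_deg0 (m : mon) : mon_deg m = 0%N -> m = m0.
Proof.
move=> /eqP; rewrite /mon_deg sum_nat_eq0 => /forallP h.
by apply/ffunP => l; apply/val_inj; rewrite /= m0_val; apply/eqP/h.
Qed.

Lemma mon_deg_m0 : mon_deg m0 = 0%N.
Proof. by rewrite /mon_deg big1 // => l _; rewrite m0_val. Qed.

Lemma deg_succ (m : mon) n : mon_deg m = n.+1 ->
  exists l (m' : mon), [/\ m = mon_inc m' l, mon_deg m' = n & (m' l < 3)%N].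
Proof.
move=> hd; case: (pickP (fun l => 0 < m l)%N) => [l hl | h0]; last first.
  suff : mon_deg m = 0%N by rewrite hd.
  by rewrite /mon_deg big1 // => l _; have := h0 l; rewrite lt0n => /negbFE/eqP.
set m' : mon := [ffun j => if j == l then inord (m l).-1 else m j].
have hl' : (m' l : nat) = (m l).-1.
  by rewrite ffunE eqxx inordK // (leq_ltn_trans (leq_pred _)) // ltn_ord.
have h3 : (m' l < 3)%N.
  by rewrite hl' -ltnS prednK // -ltnS (ltn_ord (m l)).
have E : m = mon_inc m' l.
  apply/ffunP => j; apply/val_inj; rewrite /= mon_inc_val //.
  case: (eqVneq j l) => [->|hj]; first by rewrite hl' addn1 prednK.
  by rewrite addn0 ffunE (negPf hj).
exists l, m'; split => //.
by have := hd; rewrite E mon_deg_inc // => -[].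
Qed.

Lemma deg3_inc3 (m : mon) : mon_deg m = 3%N -> exists a b c, m = inc3 a b c.
Proof.
move=> /deg_succ [l1 [m1 [-> /deg_succ [l2 [m2 [-> /deg_succ [l3 [m3 [-> /mon_deg0 -> _]]] _]]] _]]].
by exists l2, l1, l3.
Qed.

Lemma deg1_unit (m : mon) : mon_deg m = 1%N -> exists l, m = unitm l.
Proof. by move=> /deg_succ [l [m' [-> /mon_deg0 -> _]]]; exists l. Qed.

Lemma unitm_lt3 k i : (unitm k i < 3)%N.
Proof. by rewrite unitm_val; case: (i == k). Qed.
Lemma incu_lt3 k i j : (mon_inc (unitm k) i j < 3)%N.
Proof. by rewrite incu_val; case: (j == k); case: (j == i). Qed.

Lemma deg_unitm k : mon_deg (unitm k) = 1%N.
Proof. by rewrite mon_deg_inc ?mon_deg_m0 // m0_val. Qed.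

Lemma deg_inc3 i j k : mon_deg (inc3 i j k) = 3%N.
Proof. by rewrite /inc3 mon_deg_inc ?incu_lt3 // mon_deg_inc ?unitm_lt3 // deg_unitm. Qed.

Lemma unitm_inj : injective unitm.
Proof.
move=> a b E; have := congr1 (fun m : mon => nat_of_ord (m a)) E.
by rewrite /= !unitm_val eqxx; case: eqP.
Qed.

Lemma pderiv2E (H : poly6 R) i j m :
  pderiv i (pderiv j H) m = if (m i < 3)%N && (mon_inc m i j < 3)%N
     then H (mon_inc (mon_inc m i) j) *+ ((mon_inc m i j).+1 * (m i).+1) else 0.
Proof.
rewrite ffunE; case: ifP => h1 //=; rewrite ffunE; case: ifP => h2 //.
  by rewrite -mulrnA.
by rewrite mul0rn.
Qed.

Lemma pderiv2_deg (H : poly6 R) i j m : homog3 H -> mon_deg m != 1%N ->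
  pderiv i (pderiv j H) m = 0.
Proof.
move=> h3 hd; rewrite pderiv2E; case: ifP => // /andP[h1 h2].
rewrite h3 ?mul0rn // !mon_deg_inc //.
Qed.

Lemma peval_deg1 (G : poly6 R) x : (forall m, mon_deg m != 1%N -> G m = 0) ->
  peval G x = \sum_l G (unitm l) * x l.
Proof.
move=> hG; rewrite /peval.
have E m : G m * \prod_i x i ^+ m i = \sum_l (m == unitm l)%:R * (G (unitm l) * x l).
  case: (eqVneq (mon_deg m) 1%N) => hd.
    have [l0 ->] := deg1_unit hd.
    rewrite [RHS](bigD1 l0) //= eqxx mul1r [X in _ + X]big1 ?addr0; last first.
      by move=> l /negPf hl; rewrite (inj_eq unitm_inj) eq_sym hl mul0r.
    congr (_ * _); rewrite (bigD1 l0) //= unitm_val eqxx expr1 big1 ?mulr1 //.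
    by move=> i /negPf hi; rewrite unitm_val hi expr0.
  rewrite hG // mul0r big1 // => l _.
  case: eqP => [E|]; last by rewrite mul0r.
  by move: hd; rewrite E deg_unitm eqxx.
rewrite (eq_bigr _ (fun m _ => E m)) exchange_big /=; apply: eq_bigr => l _.
rewrite (bigD1 (unitm l)) //= eqxx mul1r big1 ?addr0 // => m /negPf ->.
by rewrite mul0r.
Qed.

Definition Tsl (H : poly6 R) (l : 'I_6) : 'M[R]_6 := \matrix_(i, j) Tt H i j l.

Lemma hesseE (H : poly6 R) x : homog3 H -> hesse H x = \sum_l x l *: Tsl H l.
Proof.
move=> h3; apply/matrixP => i j; rewrite mxE peval_deg1; last first.
  by move=> m; apply: pderiv2_deg.
rewrite summxE; apply: eq_bigr => l _; rewrite !mxE mulrC.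
by [].
Qed.

Lemma sol_spaceE (A : 'M[R]_6) H : sol_space A H <->
  homog3 H /\ forall l, A *m Tsl H l = Tsl H l *m A^T.
Proof.
split => [[h3 hx]|[h3 h]]; split => //; [move=> l | move=> x].
  have := hx (fun l' => (l' == l)%:R); rewrite hesseE //.
  rewrite (bigD1 l) //= eqxx scale1r big1 ?addr0 // => l' /negPf ->.
  by rewrite scale0r.
rewrite hesseE // mulmx_sumr mulmx_suml; apply: eq_bigr => l _.
by rewrite -scalemxAr -scalemxAl h.
Qed.

Definition mono (m : mon) : poly6 R := [ffun m' => (m' == m)%:R].
Definition Polyt (T : 'I_6 -> 'I_6 -> 'I_6 -> R) : poly6 R :=
  \sum_(i < 6) \sum_(j < 6) \sum_(k < 6) (T i j k / 6) *: mono (inc3 i j k).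

Lemma PolytE T m : Polyt T m =
  \sum_(i < 6) \sum_(j < 6) \sum_(k < 6) T i j k / 6 * (m == inc3 i j k)%:R.
Proof.
rewrite sum_ffunE; apply: eq_bigr => i _; rewrite sum_ffunE; apply: eq_bigr => j _.
by rewrite sum_ffunE; apply: eq_bigr => k _; rewrite !ffunE.
Qed.

Lemma Polyt_hom T : homog3 (Polyt T).
Proof.
move=> m hd; rewrite PolytE big1 // => i _; rewrite big1 // => j _; rewrite big1 // => k _.
case: eqP => [E|]; last by rewrite mulr0.
by move: hd; rewrite E deg_inc3 eqxx.
Qed.

Lemma cnt_eq a b c :
  (\sum_(i < 6) \sum_(j < 6) \sum_(k < 6) (inc3 a b c == inc3 i j k)%:R : R) * (nf a b c)%:R = 6.
Proof.
have := allI6 c_cnt a => /allI6/(_ b)/allI6/(_ c)/eqP E.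
under eq_bigr => i _ do under eq_bigr => j _ do rewrite -natr_sum.
under eq_bigr => i _ do rewrite -natr_sum.
rewrite -natr_sum -natrM big_distrl /=.
have -> : (\sum_(i < 6) (\sum_(j < 6) \sum_(k < 6) (inc3 a b c == inc3 i j k)) * nf a b c)%N
   = (\sum_(i < 6) \sum_(j < 6) \sum_(k < 6) (eqn3 a b c i j k * nfn a b c))%N.
  apply: eq_bigr => i _; rewrite big_distrl; apply: eq_bigr => j _.
  rewrite big_distrl; apply: eq_bigr => k _; by rewrite inc3_eqE nf_val.
rewrite (sum6 (fun i => \sum_(j<6) \sum_(k<6) (eqn3 a b c i j k * nfn a b c)%N)).
rewrite -[RHS]/((6%N)%:R); congr (_%:R); rewrite -[RHS]E.
congr sumn; apply: eq_map => i.
rewrite (sum6 (fun j => \sum_(k<6) (eqn3 a b c i j k * nfn a b c)%N)).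
congr sumn; apply: eq_map => j.
by rewrite (sum6 (fun k => (eqn3 a b c i j k * nfn a b c)%N)).
Qed.

Lemma sum_perm6 (F : 'I_6 -> 'I_6 -> 'I_6 -> R) a b c :
  (forall i j k, inc3 a b c = inc3 i j k -> F i j k = F a b c) ->
  \sum_(i < 6) \sum_(j < 6) \sum_(k < 6) F i j k * (inc3 a b c == inc3 i j k)%:R =
  F a b c * \sum_(i < 6) \sum_(j < 6) \sum_(k < 6) (inc3 a b c == inc3 i j k)%:R.
Proof.
move=> hF; rewrite mulr_sumr; apply: eq_bigr => i _; rewrite mulr_sumr.
apply: eq_bigr => j _; rewrite mulr_sumr; apply: eq_bigr => k _.
by case: eqP => [/hF ->|]; rewrite ?mulr0.
Qed.

Lemma six_neq0 : (6 : R) != 0.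
Proof. by rewrite pnatr_eq0. Qed.

Lemma Tt_Polyt T : symT T -> forall a b c, Tt (Polyt T) a b c = T a b c.
Proof.
move=> hT a b c; rewrite TtE PolytE.
have -> : \sum_(i < 6) \sum_(j < 6) \sum_(k < 6) T i j k / 6 * (inc3 a b c == inc3 i j k)%:R
  = T a b c / 6 * \sum_(i < 6) \sum_(j < 6) \sum_(k < 6) (inc3 a b c == inc3 i j k)%:R.
  by apply: (sum_perm6 (F := fun i j k => T i j k / 6)) => i j k E; rewrite (perm6 hT E).
rewrite -(mulr_natr _ (nf a b c)) -(mulrA (T a b c / 6)) cnt_eq.
by rewrite divfK // six_neq0.
Qed.

Lemma Polyt_Tt (H : poly6 R) : homog3 H -> Polyt (Tt H) = H.
Proof.
move=> h3; apply/ffunP => m; rewrite PolytE.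
case: (eqVneq (mon_deg m) 3%N) => hd; last first.
  rewrite h3 // big1 // => i _; rewrite big1 // => j _; rewrite big1 // => k _.
  case: eqP => [E|]; last by rewrite mulr0.
  by move: hd; rewrite E deg_inc3 eqxx.
have [a [b [c ->]]] := deg3_inc3 hd.
have -> : \sum_(i < 6) \sum_(j < 6) \sum_(k < 6) Tt H i j k / 6 * (inc3 a b c == inc3 i j k)%:R
  = Tt H a b c / 6 * \sum_(i < 6) \sum_(j < 6) \sum_(k < 6) (inc3 a b c == inc3 i j k)%:R.
  apply: (sum_perm6 (F := fun i j k => Tt H i j k / 6)) => i j k E.
  by rewrite (perm6 (Tt_sym H) E).
rewrite TtE -(mulr_natr _ (nf a b c)) mulrAC -(mulrA (H (inc3 a b c))).
by rewrite (mulrC (nf a b c)%:R) cnt_eq mulfK // six_neq0.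
Qed.


End Bridge.

Section Tri.
Variable R : realFieldType.
Notation cV := ('cV[R]_6).
Notation tens := ('I_6 -> 'I_6 -> 'I_6 -> R).

Definition tri (T : tens) (u v w : cV) : R :=
  \sum_i \sum_j \sum_k T i j k * (u i 0 * v j 0 * w k 0).

Lemma lin1 n (a : 'I_n -> R) (x : 'I_n -> cV) (c : 'I_6 -> R) :
  \sum_i (\sum_l a l *: x l) i 0 * c i = \sum_l a l * \sum_i x l i 0 * c i.
Proof.
under eq_bigr do rewrite summxE big_distrl /=.
rewrite exchange_big /=; apply: eq_bigr => l _; rewrite mulr_sumr.
by apply: eq_bigr => i _; rewrite mxE mulrA.
Qed.

Lemma tri_u T u v w : tri T u v w = \sum_i u i 0 * (\sum_j \sum_k T i j k * (v j 0 * w k 0)).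
Proof.
apply: eq_bigr => i _; rewrite mulr_sumr; apply: eq_bigr => j _; rewrite mulr_sumr.
apply: eq_bigr => k _; ring.
Qed.

Lemma tri_v T u v w : tri T u v w = \sum_j v j 0 * (\sum_i \sum_k T i j k * (u i 0 * w k 0)).
Proof.
rewrite /tri exchange_big; apply: eq_bigr => j _; rewrite mulr_sumr; apply: eq_bigr => i _.
rewrite mulr_sumr; apply: eq_bigr => k _; ring.
Qed.

Lemma tri_w T u v w : tri T u v w = \sum_k w k 0 * (\sum_i \sum_j T i j k * (u i 0 * v j 0)).
Proof.
rewrite /tri; under eq_bigr do rewrite exchange_big.
rewrite exchange_big; apply: eq_bigr => k _; rewrite mulr_sumr; apply: eq_bigr => i _.
rewrite mulr_sumr; apply: eq_bigr => j _; ring.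
Qed.

Definition trilin (F : cV -> cV -> cV -> R) :=
  forall n (a : 'I_n -> R) (x : 'I_n -> cV) v w,
  [/\ F (\sum_l a l *: x l) v w = \sum_l a l * F (x l) v w,
      F v (\sum_l a l *: x l) w = \sum_l a l * F v (x l) w &
      F v w (\sum_l a l *: x l) = \sum_l a l * F v w (x l)].

Lemma tri_trilin T : trilin (tri T).
Proof.
move=> n a x v w; split.
- rewrite tri_u lin1; apply: eq_bigr => l _; by rewrite tri_u.
- rewrite tri_v lin1; apply: eq_bigr => l _; by rewrite tri_v.
- rewrite tri_w lin1; apply: eq_bigr => l _; by rewrite tri_w.
Qed.

Lemma tri_symP (T : tens) : symT T -> forall u v w,
  tri T u v w = tri T v u w /\ tri T u v w = tri T u w v.
Proof.
move=> hT u v w; split.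
  rewrite /tri [RHS]exchange_big; apply: eq_bigr => i _; apply: eq_bigr => j _.
  apply: eq_bigr => k _; rewrite (proj1 (hT i j k)); ring.
rewrite /tri; apply: eq_bigr => i _; rewrite [RHS]exchange_big; apply: eq_bigr => j _.
apply: eq_bigr => k _; rewrite (proj2 (hT i j k)); ring.
Qed.

Definition dv (i : 'I_6) : cV := delta_mx i 0.

Lemma sum_dv (a : 'I_6) (c : 'I_6 -> R) : \sum_i dv a i 0 * c i = c a.
Proof.
rewrite (bigD1 a) //= mxE !eqxx mul1r big1 ?addr0 // => i /negPf hi.
by rewrite mxE hi mul0r.
Qed.

Lemma tri_dv T a b c : tri T (dv a) (dv b) (dv c) = T a b c.
Proof.
rewrite tri_u sum_dv.
have -> : \sum_j \sum_k T a j k * (dv b j 0 * dv c k 0)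
    = \sum_j dv b j 0 * \sum_k dv c k 0 * T a j k.
  apply: eq_bigr => j _; rewrite mulr_sumr; apply: eq_bigr => k _; ring.
by rewrite sum_dv sum_dv.
Qed.

Lemma tri_lin_tens n (c : 'I_n -> R) (Ts : 'I_n -> tens) u v w :
  tri (fun i j k => \sum_l c l * Ts l i j k) u v w = \sum_l c l * tri (Ts l) u v w.
Proof.
rewrite /tri; under eq_bigr do under eq_bigr do under eq_bigr do rewrite big_distrl /=.
under [RHS]eq_bigr do rewrite mulr_sumr.
rewrite [RHS]exchange_big /=; apply: eq_bigr => i _.
under [RHS]eq_bigr do rewrite mulr_sumr.
rewrite [RHS]exchange_big /=; apply: eq_bigr => j _.
under [RHS]eq_bigr do rewrite mulr_sumr.
rewrite [RHS]exchange_big /=; apply: eq_bigr => k _.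
by apply: eq_bigr => l _; ring.
Qed.

Lemma tl1 F : trilin F -> forall n (a : 'I_n -> R) (x : 'I_n -> cV) v w,
  F (\sum_l a l *: x l) v w = \sum_l a l * F (x l) v w.
Proof. by move=> hF n a x v w; case: (hF n a x v w). Qed.
Lemma tl2 F : trilin F -> forall n (a : 'I_n -> R) (x : 'I_n -> cV) v w,
  F v (\sum_l a l *: x l) w = \sum_l a l * F v (x l) w.
Proof. by move=> hF n a x v w; case: (hF n a x v w). Qed.
Lemma tl3 F : trilin F -> forall n (a : 'I_n -> R) (x : 'I_n -> cV) v w,
  F v w (\sum_l a l *: x l) = \sum_l a l * F v w (x l).
Proof. by move=> hF n a x v w; case: (hF n a x v w). Qed.

Lemma colexp (W : 'M[R]_6) (y : cV) : W *m y = \sum_p y p 0 *: col p W.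
Proof.
apply/matrixP => i j; rewrite (ord1 j) summxE !mxE; apply: eq_bigr => p _.
by rewrite !mxE mulrC.
Qed.

Lemma basis_zero (F : cV -> cV -> cV -> R) (W : 'M[R]_6) :
  trilin F -> W \in unitmx ->
  (forall p q r, F (col p W) (col q W) (col r W) = 0) -> forall u v w, F u v w = 0.
Proof.
move=> hF hW h0 u v w.
rewrite -(mulKVmx hW u) -(mulKVmx hW v) -(mulKVmx hW w) !(colexp W).
rewrite (tl1 hF) big1 // => p _.
rewrite (tl2 hF) big1 ?mulr0 // => q _.
rewrite (tl3 hF) big1 ?mulr0 // => r _.
by rewrite h0 mulr0.
Qed.

Definition pull (V : 'M[R]_6) (T : tens) : tens :=
  fun i j k => tri T (col i V) (col j V) (col k V).

Lemma tri_pull V T u v w : tri (pull V T) u v w = tri T (V *m u) (V *m v) (V *m w).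
Proof.
rewrite !colexp (tl1 (tri_trilin _)) tri_u; apply: eq_bigr => i _; congr (_ * _).
rewrite (tl2 (tri_trilin _)); apply: eq_bigr => j _.
rewrite (tl3 (tri_trilin _)) !mulr_sumr; apply: eq_bigr => k _.
rewrite /pull; ring.
Qed.

Definition slT (T : tens) (l : 'I_6) : 'M[R]_6 := \matrix_(i, j) T i j l.
Definition condA (A : 'M[R]_6) (T : tens) := forall l, A *m slT T l = slT T l *m A^T.
Definition movable (B : 'M[R]_6) (T : tens) :=
  forall u v w, tri T (B *m u) v w = tri T u (B *m v) w.

Definition bil (M : 'M[R]_6) (x y : cV) : R := (x^T *m M *m y) 0 0.

Lemma bilE M x y : bil M x y = \sum_i \sum_j M i j * (x i 0 * y j 0).
Proof.
rewrite /bil mxE; under eq_bigr do rewrite mxE big_distrl /=.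
rewrite exchange_big; apply: eq_bigr => i _; apply: eq_bigr => j _; rewrite !mxE; ring.
Qed.

Lemma tri_bil T u v w : tri T u v w = \sum_k w k 0 * bil (slT T k) u v.
Proof.
rewrite tri_w; apply: eq_bigr => k _; rewrite bilE; congr (_ * _).
by apply: eq_bigr => i _; apply: eq_bigr => j _; rewrite mxE.
Qed.

Lemma bil_dv M i j : bil M (dv i) (dv j) = M i j.
Proof. by rewrite /bil /dv trmx_delta -rowE -colE !mxE. Qed.

Lemma bil_movl (A M : 'M[R]_6) x y : bil (A *m M) x y = bil M (A^T *m x) y.
Proof. by rewrite /bil trmx_mul trmxK !mulmxA. Qed.

Lemma bil_movr (A M : 'M[R]_6) x y : bil (M *m A^T) x y = bil M x (A^T *m y).
Proof. by rewrite /bil !mulmxA. Qed.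

Lemma cond_movable A T : condA A T -> movable A^T T.
Proof.
move=> h u v w; rewrite !tri_bil; apply: eq_bigr => k _.
by rewrite -bil_movl h bil_movr.
Qed.

Lemma movable_cond A T : movable A^T T -> condA A T.
Proof.
move=> h l; apply/matrixP => i j.
rewrite -!bil_dv bil_movl bil_movr.
have E x y : bil (slT T l) x y = tri T x y (dv l).
  by rewrite tri_bil sum_dv.
by rewrite !E h.
Qed.

End Tri.

Definition o0 : 'I_6 := ord0.
Definition o3 : 'I_6 := @Ordinal 6 3 isT.
Definition o5 : 'I_6 := @Ordinal 6 5 isT.

Section Str.
Variable R : realFieldType.
Notation cV := ('cV[R]_6).
Notation tens := ('I_6 -> 'I_6 -> 'I_6 -> R).
Variable B : 'M[R]_6.

Definition fv (a : bool) : cV := dv R (if a then o5 else o0).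
Definition gv (a : bool) (i : nat) : cV := B ^+ i *m fv a.
Definition Wm : 'M[R]_6 := \matrix_(i, p) gv (3 <= p)%N (p %% 3) i 0.

Lemma col_Wm p : col p Wm = gv (3 <= p)%N (p %% 3).
Proof. by apply/matrixP => i j; rewrite (ord1 j) !mxE. Qed.

Lemma mmE (X Y : 'M[R]_6) : X *m Y = X * Y.
Proof. by []. Qed.

Lemma gv0 a : gv a 0 = fv a.
Proof. by rewrite /gv expr0 mul1mx. Qed.

Lemma powmx n m (u : cV) : B ^+ n *m (B ^+ m *m u) = B ^+ (n + m) *m u.
Proof. by rewrite mulmxA mmE -exprD. Qed.

Lemma movP T : movable B T -> forall n u v w, tri T (B ^+ n *m u) v w = tri T u (B ^+ n *m v) w.
Proof.
move=> h; elim=> [|n IH] u v w; first by rewrite !expr0 !mul1mx.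
rewrite [in LHS]exprSr -mmE -mulmxA IH h.
by rewrite mulmxA (mmE B) -exprS.
Qed.

Lemma mov3 T : symT T -> movable B T -> forall n u v w,
  tri T u v (B ^+ n *m w) = tri T (B ^+ n *m u) v w.
Proof.
move=> hs hm n u v w.
rewrite (proj2 (tri_symP hs _ _ _)) -movP //.
by rewrite (proj2 (tri_symP hs _ _ _)).
Qed.

Lemma tri_gv T : symT T -> movable B T -> forall a b c i j l,
  tri T (gv a i) (gv b j) (gv c l) = tri T (gv a (i + j + l)) (fv b) (fv c).
Proof.
move=> hs hm a b c i j l.
by rewrite /gv -movP // mov3 // !powmx addnC (addnC l) addnA.
Qed.

Definition hh T a b c N := tri T (gv a N) (fv b) (fv c).

Lemma hh12 T : symT T -> movable B T -> forall a b c N, hh T a b c N = hh T b a c N.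
Proof.
move=> hs hm a b c N; by rewrite /hh /gv (proj1 (tri_symP hs _ _ _)) -movP //.
Qed.

Lemma hh23 T : symT T -> forall a b c N, hh T a b c N = hh T a c b N.
Proof. by move=> hs a b c N; rewrite /hh (proj2 (tri_symP hs _ _ _)). Qed.

Definition Rel (c0 c1 c2 : R) :=
  forall a, gv a 3 = c0 *: gv a 0 + c1 *: gv a 1 + c2 *: gv a 2.

Lemma tl1_3 F : trilin F -> forall (c0 c1 c2 : R) x0 x1 x2 v w,
  F (c0 *: x0 + c1 *: x1 + c2 *: x2) v w = c0 * F x0 v w + c1 * F x1 v w + c2 * F x2 v w.
Proof.
move=> hF c0 c1 c2 x0 x1 x2 v w.
have := tl1 hF (fun m : 'I_3 => nth 0 [:: c0; c1; c2] m) (fun m : 'I_3 => nth 0 [:: x0; x1; x2] m) v w.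
by rewrite !big_ord_recr /= !big_ord0 !add0r.
Qed.

Lemma gv_rec c0 c1 c2 : Rel c0 c1 c2 -> forall a N,
  gv a (N + 3) = c0 *: gv a N + c1 *: gv a (N + 1) + c2 *: gv a (N + 2).
Proof.
move=> hR a N; rewrite /gv -!powmx -!/(gv a _) hR.
by rewrite !mulmxDr !scalemxAr !powmx !addn0.
Qed.

Definition ell T (k : 'I_12) :=
  tri T (gv (3 <= k %/ 3)%N (k %% 3)) (fv (2 <= k %/ 3)%N) (fv (1 <= k %/ 3)%N).

Lemma divmod3 s n : (n < 3)%N -> ((s * 3 + n) %/ 3 = s /\ (s * 3 + n) %% 3 = n)%N.
Proof.
move=> hn; split; first by rewrite divnMDl // divn_small // addn0.
by rewrite modnMDl modn_small.
Qed.

Lemma ell_hh T (k : 'I_12) s n : (n < 3)%N -> val k = (s * 3 + n)%N ->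
  ell T k = hh T (3 <= s)%N (2 <= s)%N (1 <= s)%N n.
Proof. by move=> hn hk; rewrite /ell /hh hk; case: (divmod3 s hn) => -> ->. Qed.


Lemma hh_small T : symT T -> movable B T -> (forall k, ell T k = 0) ->
  forall a b c n, (n < 3)%N -> hh T a b c n = 0.
Proof.
move=> hs hm h0 a b c n hn.
have E s : (s < 4)%N -> hh T (3 <= s)%N (2 <= s)%N (1 <= s)%N n = 0.
  move=> hs4; have hk : (s * 3 + n < 12)%N by lia.
  by rewrite -(@ell_hh T (Ordinal hk)) //.
have S12 := hh12 hs hm; have S23 := hh23 hs.
case: a; case: b; case: c.
- exact: (E 3%N isT).
- by rewrite S23 S12; exact: (E 2%N isT).
- by rewrite S12; exact: (E 2%N isT).
- by rewrite S12 S23; exact: (E 1%N isT).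
- exact: (E 2%N isT).
- by rewrite S23; exact: (E 1%N isT).
- exact: (E 1%N isT).
- exact: (E 0%N isT).
Qed.

Lemma hh_all T c0 c1 c2 : Rel c0 c1 c2 -> symT T -> movable B T -> (forall k, ell T k = 0) ->
  forall N a b c, hh T a b c N = 0.
Proof.
move=> hR hs hm h0; elim/ltn_ind => N IH a b c.
case: (ltnP N 3) => hN; first exact: hh_small.
have -> : N = ((N - 3) + 3)%N by rewrite subnK.
have e0 := IH (N - 3)%N ltac:(lia) a b c.
have e1 := IH (N - 3 + 1)%N ltac:(lia) a b c.
have e2 := IH (N - 3 + 2)%N ltac:(lia) a b c.
rewrite /hh in e0 e1 e2 *.
by rewrite (gv_rec hR) (tl1_3 (tri_trilin T)) e0 e1 e2 !mulr0 !addr0.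
Qed.

Lemma uniq_T T c0 c1 c2 : Wm \in unitmx -> Rel c0 c1 c2 -> symT T -> movable B T ->
  (forall k, ell T k = 0) -> forall i j k, T i j k = 0.
Proof.
move=> hW hR hs hm h0 i j k.
rewrite -tri_dv; apply: (basis_zero (tri_trilin T) hW) => p q r.
rewrite !col_Wm tri_gv //; exact: (hh_all hR).
Qed.

End Str.

Section Constr.
Variable R : realFieldType.
Notation cV := ('cV[R]_6).
Notation tens := ('I_6 -> 'I_6 -> 'I_6 -> R).
Variable B : 'M[R]_6.
Variables c0 c1 c2 : R.
Hypothesis hR : Rel B c0 c1 c2.
Hypothesis hW : Wm B \in unitmx.

Fixpoint st (y0 y1 y2 : R) (N : nat) : R * R * R :=
  match N with
  | 0 => (y0, y1, y2)
  | N'.+1 => let t := st y0 y1 y2 N' in (t.1.2, t.2, c0 * t.1.1 + c1 * t.1.2 + c2 * t.2)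
  end.

Definition psi (n N : nat) : R := (st (n == 0)%:R (n == 1)%:R (n == 2)%:R N).1.1.

Lemma psi_small n N : (N < 3)%N -> psi n N = (N == n)%:R.
Proof. by case: N => [|[|[|]]] // _; rewrite /psi /= eq_sym. Qed.

Lemma psi_rec n N : psi n (N + 3) = c0 * psi n N + c1 * psi n (N + 1) + c2 * psi n (N + 2).
Proof. by rewrite addn3 addn2 addn1. Qed.

Definition Tn s n (a b c : bool) (i j l : nat) : R := ((a + b + c)%N == s)%:R * psi n (i + j + l).
Definition Tp s n : tens := fun p q r =>
  Tn s n (3 <= p)%N (3 <= q)%N (3 <= r)%N (p %% 3) (q %% 3) (r %% 3).
Definition Vm := invmx (Wm B).
Definition Tc s n : tens := pull Vm (Tp s n).

Lemma Tp_sym s n : symT (Tp s n).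
Proof.
move=> p q r; rewrite /Tp /Tn; split.
  by rewrite (addnC (3 <= p)%N) (addnC (p %% 3)%N).
by rewrite -!addnA (addnC (3 <= q)%N) (addnC (q %% 3)%N).
Qed.

Lemma Tc_sym s n : symT (Tc s n).
Proof. by move=> i j k; rewrite /Tc /pull; apply: tri_symP; apply: Tp_sym. Qed.

Lemma V_gv a i : (i < 3)%N -> exists p : 'I_6,
  [/\ Vm *m gv B a i = dv R p, (3 <= p)%N = a & (p %% 3 = i)%N].
Proof.
move=> hi; have [e1 e2] : (3 <= a * 3 + i)%N = a /\ ((a * 3 + i) %% 3 = i)%N.
  by split; [case: a; lia | rewrite modnMDl modn_small].
have hp : (a * 3 + i < 6)%N by case: (a) e1; lia.
exists (Ordinal hp); split => //.
have -> : gv B a i = col (Ordinal hp) (Wm B) by rewrite col_Wm /= e1 e2.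
by rewrite colE mulmxA /Vm mulVmx // mul1mx.
Qed.

Lemma tri_Tc s n a b c i j l : (i < 3)%N -> (j < 3)%N -> (l < 3)%N ->
  tri (Tc s n) (gv B a i) (gv B b j) (gv B c l) = Tn s n a b c i j l.
Proof.
move=> hi hj hl; rewrite tri_pull.
have [p [-> <- <-]] := V_gv a hi.
have [q [-> <- <-]] := V_gv b hj.
have [r [-> <- <-]] := V_gv c hl.
by rewrite tri_dv.
Qed.

Lemma BgvS a i : B *m gv B a i = gv B a i.+1.
Proof. by rewrite /gv mulmxA (mmE B) -exprS. Qed.

Lemma stepB s n a b c i j l : (i < 3)%N -> (j < 3)%N -> (l < 3)%N ->
  tri (Tc s n) (B *m gv B a i) (gv B b j) (gv B c l) =
  ((a + b + c)%N == s)%:R * psi n (i + j + l + 1).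
Proof.
move=> hi hj hl; rewrite BgvS.
case: (ltnP i 2) => hi2.
  by rewrite tri_Tc // /Tn; congr (_ * psi _ _); lia.
have -> : i = 2%N by lia.
rewrite hR (tl1_3 (tri_trilin _)) !tri_Tc // /Tn.
have -> : (2 + j + l + 1 = (j + l) + 3)%N by lia.
rewrite psi_rec.
have -> : (0 + j + l = j + l)%N by lia.
have -> : (1 + j + l = j + l + 1)%N by lia.
have -> : (2 + j + l = j + l + 2)%N by lia.
ring.
Qed.

Lemma trilin_mov T : trilin (fun u v w => tri T (B *m u) v w - tri T u (B *m v) w).
Proof.
move=> m a x v w.
have Bs : B *m (\sum_l a l *: x l) = \sum_l a l *: (B *m x l).
  by rewrite mulmx_sumr; apply: eq_bigr => l _; rewrite -scalemxAr.
split.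
- rewrite Bs.
  rewrite (tl1 (tri_trilin T)) (tl1 (tri_trilin T)) -sumrB.
  by apply: eq_bigr => l _; rewrite mulrBr.
- rewrite Bs.
  rewrite (tl2 (tri_trilin T)) (tl2 (tri_trilin T)) -sumrB.
  by apply: eq_bigr => l _; rewrite mulrBr.
- rewrite (tl3 (tri_trilin T)) (tl3 (tri_trilin T)) -sumrB.
  by apply: eq_bigr => l _; rewrite mulrBr.
Qed.

Lemma Tc_mov s n : movable B (Tc s n).
Proof.
move=> u v w; apply/eqP; rewrite -subr_eq0; apply/eqP; move: u v w.
apply: (basis_zero (trilin_mov (Tc s n)) hW) => p q r.
rewrite !col_Wm.
have h3 (x : 'I_6) : (x %% 3 < 3)%N by rewrite ltn_mod.
rewrite stepB // (proj1 (tri_symP (Tc_sym s n) _ _ _)) stepB //.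
rewrite (addnC (3 <= p)%N) (addnC (p %% 3)%N).
by rewrite subrr.
Qed.

Definition Tk (k : 'I_12) : tens := Tc (k %/ 3)%N (k %% 3)%N.

Lemma ell_Tk (k k' : 'I_12) : ell B (Tk k) k' = (k' == k)%:R.
Proof.
rewrite /ell -!(gv0 B).
have hs : (k' %/ 3 < 4)%N by rewrite ltn_divLR //.
have hn : (k' %% 3 < 3)%N by rewrite ltn_mod.
rewrite tri_Tc // /Tn !addn0 psi_small //.
have -> : ((3 <= k' %/ 3) + (2 <= k' %/ 3) + (1 <= k' %/ 3))%N = (k' %/ 3)%N.
  by move: hs; case: (k' %/ 3)%N => [|[|[|[|]]]].
rewrite -natrM -[(k' == k)]/(val k' == val k).
congr (_ %:R).
have -> : (k' == k :> nat) = (k' %/ 3 == k %/ 3)%N && (k' %% 3 == k %% 3)%N.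
  apply/eqP/andP => [->|[/eqP h1 /eqP h2]]; first by [].
  by rewrite (divn_eq k' 3) (divn_eq k 3) h1 h2.
by case: (_ == _); case: (_ == _).
Qed.

End Constr.


Section RelS.
Variable R : realFieldType.
Notation cV := ('cV[R]_6).

Lemma JJ : Jmx R *m Jmx R = - 1%:M.
Proof.
apply/matrixP => i j; rewrite !mxE.
rewrite !big_ord_recr big_ord0 /= !mxE.
case: i => [[|[|[|[|[|[|//]]]]]] hi]; case: j => [[|[|[|[|[|[|//]]]]]] hj] /=; rewrite ?mulr0 ?mul0r ?mulr1 ?mul1r ?add0r ?addr0 ?mulrN ?mulNr ?opprK ?oppr0 //.
Qed.

Lemma JT : (Jmx R)^T = - Jmx R.
Proof.
apply/matrixP => i j; rewrite !mxE.
case: i => [[|[|[|[|[|[|//]]]]]] hi]; case: j => [[|[|[|[|[|[|//]]]]]] hj] /=; rewrite ?oppr0 ?opprK //.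
Qed.

Variable A : 'M[R]_6.
Hypothesis hA : skew_hamiltonian A.
Notation B := (A^T).
Notation J := (Jmx R).

Definition om (x y : cV) : R := bil J x y.

Lemma AJ : A *m J = J *m B.
Proof.
have h : A^T * J = J * A by exact: hA.
have JJ' : J * J = -1 by exact: JJ.
have -> : A *m J = A * J by [].
have -> : J *m B = J * B by [].
have e1 : J * B * (J * J) = J * (B * J) * J by rewrite !mulrA.
have e2 : (J * J) * A * J = J * (J * A) * J by rewrite !mulrA.
have := congr1 (fun M => J * M * J) h => /=.
rewrite -e1 -e2 JJ' mulrN1 mulN1r mulNr => /oppr_inj.
by [].
Qed.

Lemma om_mov x y : om (B *m x) y = om x (B *m y).
Proof.
rewrite /om /bil trmx_mul trmxK -!mulmxA (mulmxA A) AJ.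
by rewrite !mulmxA.
Qed.

Lemma om_movP n x y : om (B ^+ n *m x) y = om x (B ^+ n *m y).
Proof.
elim: n x y => [|n IH] x y; first by rewrite !expr0 !mul1mx.
rewrite [in LHS]exprSr -mmE -mulmxA IH om_mov.
by rewrite mulmxA (mmE B) -exprS.
Qed.

Lemma om_anti x y : om x y = - om y x.
Proof.
have tr (M : 'M[R]_1) : M 0 0 = M^T 0 0 by rewrite mxE.
rewrite /om /bil tr !trmx_mul trmxK JT mulNmx mulmxN mxE.
by rewrite mulmxA.
Qed.

Lemma om_self n x : om x (B ^+ n *m x) = 0.
Proof.
have h : om x (B ^+ n *m x) = - om x (B ^+ n *m x) by rewrite {1}om_anti om_movP.
have e : om x (B ^+ n *m x) *+ 2 = 0 by rewrite mulr2n {2}h subrr.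
by move/eqP: e; rewrite mulrn_eq0 /= => /eqP.
Qed.

Lemma om_gv a b i j : om (gv B a i) (gv B b j) = om (fv R a) (gv B b (i + j)).
Proof. by rewrite /gv om_movP powmx. Qed.

Lemma om_sum2 n (c : 'I_n -> R) (y : 'I_n -> cV) x :
  om x (\sum_l c l *: y l) = \sum_l c l * om x (y l).
Proof.
rewrite /om /bil mulmx_sumr summxE; apply: eq_bigr => l _.
by rewrite -scalemxAr mxE.
Qed.

Lemma om_sum1 n (c : 'I_n -> R) (y : 'I_n -> cV) x :
  om (\sum_l c l *: y l) x = \sum_l c l * om (y l) x.
Proof.
rewrite om_anti om_sum2 -sumrN; apply: eq_bigr => l _.
by rewrite om_anti mulrN opprK.
Qed.

Lemma om_sum2D n (c d : 'I_n -> R) (y z : 'I_n -> cV) x :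
  om x (\sum_l c l *: y l + \sum_l d l *: z l) = \sum_l c l * om x (y l) + \sum_l d l * om x (z l).
Proof. by rewrite /om /bil mulmxDr mxE -!/(bil _ _ _) -!/(om _ _) !om_sum2. Qed.


Lemma om_sum1D n (c d : 'I_n -> R) (y z : 'I_n -> cV) x :
  om (\sum_l c l *: y l + \sum_l d l *: z l) x = \sum_l c l * om (y l) x + \sum_l d l * om (z l) x.
Proof.
rewrite om_anti om_sum2D opprD -!sumrN; congr (_ + _); apply: eq_bigr => l _;
by rewrite om_anti mulrN opprK.
Qed.

Definition hN N := om (fv R false) (gv B true N).
Definition Hm : 'M[R]_3 := \matrix_(i, j) hN (i + j).

Lemma hankel (z : 'I_3 -> R) : Hm \in unitmx ->
  (forall j : 'I_3, \sum_(m < 3) z m * hN (j + m) = 0) -> forall m, z m = 0.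
Proof.
move=> hU h m.
pose zc : 'cV[R]_3 := \col_m z m.
have e : Hm *m zc = 0.
  apply/matrixP => j k; rewrite mxE [RHS]mxE -[RHS](h j); apply: eq_bigr => l _.
  by rewrite !mxE mulrC.
have := congr1 (mulmx (invmx Hm)) e; rewrite mulKmx // mulmx0 => /matrixP/(_ m 0).
by rewrite !mxE.
Qed.

Lemma g_same a i j : om (gv B a i) (gv B a j) = 0.
Proof. by rewrite om_gv /gv om_self. Qed.

Lemma g_FT i j : om (gv B false i) (gv B true j) = hN (i + j).
Proof. by rewrite om_gv. Qed.

Lemma g_TF i j : om (gv B true i) (gv B false j) = - hN (j + i).
Proof. by rewrite om_anti g_FT. Qed.

Lemma coord (y : cV) : Wm B \in unitmx -> exists dL dR : 'I_3 -> R,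
  y = \sum_m dL m *: gv B false m + \sum_m dR m *: gv B true m.
Proof.
move=> hW; pose d := invmx (Wm B) *m y.
exists (fun m : 'I_3 => d (lshift 3 m) 0), (fun m : 'I_3 => d (rshift 3 m) 0).
rewrite -{1}(mulKVmx hW y) colexp.
rewrite (big_split_ord _ (m := 3) (n := 3)) /=; congr (_ + _); apply: eq_bigr => m _;
  rewrite col_Wm; congr (_ *: gv _ _ _).
- by apply/negbTE; rewrite -ltnNge /= ltn_ord.
- by rewrite /= modn_small.
- by rewrite /= modnDl modn_small.
Qed.

Lemma sum3 (V : zmodType) (f : 'I_3 -> V) :
  \sum_(m < 3) f m = f (@Ordinal 3 0 isT) + f (@Ordinal 3 1 isT) + f (@Ordinal 3 2 isT).
Proof.
rewrite !big_ord_recl big_ord0 addr0 addrA.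
by congr (f _ + f _ + f _); apply: val_inj.
Qed.

Lemma Rel_of : Wm B \in unitmx -> Hm \in unitmx -> exists c0 c1 c2, Rel B c0 c1 c2.
Proof.
move=> hW hH.
have [dL [dR eF]] := coord (gv B false 3) hW.
have [eL [eR eT]] := coord (gv B true 3) hW.
have S0 a j (c : 'I_3 -> R) : \sum_m c m * om (gv B a j) (gv B a m) = 0.
  by rewrite big1 // => m _; rewrite g_same mulr0.
have S1 j (c : 'I_3 -> R) : \sum_m c m * om (gv B false j) (gv B true m) = \sum_m c m * hN (j + m).
  by apply: eq_bigr => m _; rewrite g_FT.
have S2 j (c : 'I_3 -> R) : \sum_m c m * om (gv B true j) (gv B false m) = - \sum_m c m * hN (j + m).
  by rewrite -sumrN; apply: eq_bigr => m _; rewrite g_TF mulrN addnC.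
have S1' j (c : 'I_3 -> R) : \sum_m c m * om (gv B false m) (gv B true j) = \sum_m c m * hN (j + m).
  by apply: eq_bigr => m _; rewrite g_FT addnC.
have S0' a j (c : 'I_3 -> R) : \sum_m c m * om (gv B a m) (gv B a j) = 0.
  by rewrite big1 // => m _; rewrite g_same mulr0.
have hdR : forall m, dR m = 0.
  apply: hankel => // j; have := g_same false j 3.
  by rewrite eF om_sum2D S0 S1 add0r.
have heL : forall m, eL m = 0.
  apply: hankel => // j; have := g_same true j 3.
  by rewrite eT om_sum2D S2 S0 addr0 => /eqP; rewrite oppr_eq0 => /eqP.
have hc : forall m, dL m = eR m.
  move=> m; apply/eqP; rewrite -subr_eq0; apply/eqP; move: m.
  apply: (hankel (z := fun m => dL m - eR m)) => // j.
  under eq_bigr do rewrite mulrBl.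
  rewrite sumrB; apply/eqP; rewrite subr_eq0; apply/eqP.
  have e1 := g_FT j 3; rewrite eT om_sum2D S0 add0r S1 in e1.
  have e2 := g_FT 3 j; rewrite eF om_sum1D S1' S0' addr0 in e2.
  by rewrite e2 e1 addnC.
exists (dL (@Ordinal 3 0 isT)), (dL (@Ordinal 3 1 isT)), (dL (@Ordinal 3 2 isT)).
case.
  rewrite eT (eq_bigr (fun _ => 0)) => [|m _]; last by rewrite heL scale0r.
  by rewrite big1_eq add0r sum3 !hc.
rewrite eF [X in _ + X](eq_bigr (fun _ => 0)) => [|m _]; last by rewrite hdR scale0r.
by rewrite big1_eq addr0 sum3.
Qed.

End RelS.

Section PolyS.
Variable R : realFieldType.
Notation mxp := (mxpoly36 R).

Definition pmul (p q : mxp) : mxp :=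
  [seq (x.1 * y.1, fun i j => (x.2 i j + y.2 i j)%N) | x <- p, y <- q].
Definition pconst (c : R) : mxp := [:: (c, fun _ _ => 0%N)].
Definition pvar (a b : 'I_6) : mxp := [:: (1, fun i j => ((i == a) && (j == b) : nat))].
Definition psum (I : finType) (f : I -> mxp) : mxp := \big[cat/[::]]_(i : I) f i.
Definition pprod (I : finType) (f : I -> mxp) : mxp := \big[pmul/pconst 1]_(i : I) f i.

Lemma ev_cat p q (A : 'M[R]_6) : mxpeval (p ++ q) A = mxpeval p A + mxpeval q A.
Proof. by rewrite /mxpeval big_cat. Qed.
Lemma ev_nil (A : 'M[R]_6) : mxpeval ([::] : mxp) A = 0.
Proof. by rewrite /mxpeval big_nil. Qed.

Lemma ev_mul p q (A : 'M[R]_6) : mxpeval (pmul p q) A = mxpeval p A * mxpeval q A.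
Proof.
rewrite /mxpeval /pmul big_allpairs_dep mulr_suml; apply: eq_bigr => x _.
rewrite mulr_sumr; apply: eq_bigr => y _ /=.
under eq_bigr do under eq_bigr do rewrite exprD.
under eq_bigr do rewrite big_split /=.
rewrite big_split /=; ring.
Qed.

Lemma ev_const c (A : 'M[R]_6) : mxpeval (pconst c) A = c.
Proof.
rewrite /mxpeval big_cons big_nil addr0 /= big1 ?mulr1 // => i _.
by rewrite big1 // => j _; rewrite expr0.
Qed.

Lemma ev_var a b (A : 'M[R]_6) : mxpeval (pvar a b) A = A a b.
Proof.
rewrite /mxpeval big_cons big_nil addr0 /= mul1r (bigD1 a) //= [X in _ * X]big1 ?mulr1; last first.
  by move=> i /negPf hi; rewrite big1 // => j _; rewrite hi /= expr0.
rewrite (bigD1 b) //= !eqxx expr1 big1 ?mulr1 // => j /negPf hj.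
by rewrite hj andbF expr0.
Qed.

Lemma ev_sum (I : finType) (f : I -> mxp) (A : 'M[R]_6) : mxpeval (psum f) A = \sum_i mxpeval (f i) A.
Proof. by rewrite /psum (big_morph (fun p => mxpeval p A) (fun p q => ev_cat p q A) (ev_nil A)). Qed.

Lemma ev_prod (I : finType) (f : I -> mxp) (A : 'M[R]_6) : mxpeval (pprod f) A = \prod_i mxpeval (f i) A.
Proof. by rewrite /pprod (big_morph (fun p => mxpeval p A) (fun p q => ev_mul p q A) (ev_const 1 A)). Qed.

Fixpoint ppow (N : nat) (i j : 'I_6) : mxp :=
  match N with
  | 0 => pconst (i == j)%:R
  | N'.+1 => psum (fun l : 'I_6 => pmul (ppow N' i l) (pvar l j))
  end.

Lemma ev_pow N i j (A : 'M[R]_6) : mxpeval (ppow N i j) A = (A ^+ N) i j.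
Proof.
elim: N i j => [|N IH] i j /=; first by rewrite ev_const expr0 mxE.
rewrite ev_sum exprSr -mmE mxE; apply: eq_bigr => l _.
by rewrite ev_mul IH ev_var.
Qed.

Definition pdet n (M : 'I_n -> 'I_n -> mxp) : mxp :=
  psum (fun s : 'S_n => pmul (pconst ((-1) ^+ s)) (pprod (fun i => M i (s i)))).

Lemma ev_det n (M : 'I_n -> 'I_n -> mxp) (A : 'M[R]_6) :
  mxpeval (pdet M) A = \det (\matrix_(i, j) mxpeval (M i j) A).
Proof.
rewrite ev_sum /determinant; apply: eq_bigr => s _.
rewrite ev_mul ev_const ev_prod; congr (_ * _); apply: eq_bigr => i _.
by rewrite mxE.
Qed.

Definition fidx (p : 'I_6) : 'I_6 := if (3 <= p)%N then o5 else o0.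
Definition Wfun (A : 'M[R]_6) : 'M[R]_6 := \matrix_(i, p) (A ^+ (p %% 3)%N) (fidx p) i.
Definition Hfun (A : 'M[R]_6) : 'M[R]_3 := \matrix_(i, j) (A ^+ (i + j)%N) o5 o3.
Definition Ppoly : mxp :=
  pmul (pdet (fun i p => ppow (p %% 3)%N (fidx p) i)) (pdet (fun i j : 'I_3 => ppow (i + j)%N o5 o3)).

Lemma ev_P (A : 'M[R]_6) : mxpeval Ppoly A = \det (Wfun A) * \det (Hfun A).
Proof.
rewrite ev_mul !ev_det; congr (_ * _); congr (determinant _); apply/matrixP => i j;
by rewrite !mxE ev_pow.
Qed.

Lemma trX (A : 'M[R]_6) n : (A^T) ^+ n = (A ^+ n)^T.
Proof.
elim: n => [|n IH]; first by rewrite !expr0 trmx1.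
by rewrite exprS IH -mmE -trmx_mul mmE -exprSr.
Qed.

Lemma Wm_Wfun A : Wm A^T = Wfun A.
Proof.
apply/matrixP => i p; rewrite [LHS]mxE [RHS]mxE /gv /fv /dv.
by rewrite -colE mxE trX mxE /fidx.
Qed.

Lemma row0J (y : 'cV[R]_6) : bil (Jmx R) (dv R o0) y = y o3 0.
Proof.
rewrite /bil /dv trmx_delta -rowE mxE (bigD1 o3) //= !mxE /= mul1r big1 ?addr0 //.
move=> l hl; rewrite !mxE /=.
case: l hl => [[|[|[|[|[|[|//]]]]]] hl] //= _; by rewrite mul0r.
Qed.

Lemma Hm_Hfun A : Hm A = Hfun A.
Proof.
apply/matrixP => i j; rewrite [LHS]mxE [RHS]mxE /hN /om row0J /gv /fv /dv.
by rewrite -colE mxE trX mxE.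
Qed.

End PolyS.

Section A0S.
Variable R : realFieldType.

Definition A0 : 'M[R]_6 := \matrix_(i, j)
  ([|| ((i : nat) == 0%N) && ((j : nat) == 1%N), ((i : nat) == 1%N) && ((j : nat) == 2%N),
       ((i : nat) == 4%N) && ((j : nat) == 3%N) | ((i : nat) == 5%N) && ((j : nat) == 4%N)] : nat)%:R.

Definition M2 : 'M[R]_6 := \matrix_(i, j)
  ([|| ((i : nat) == 0%N) && ((j : nat) == 2%N) | ((i : nat) == 5%N) && ((j : nat) == 3%N)] : nat)%:R.

Lemma A0_sh : skew_hamiltonian A0.
Proof. rewrite /skew_hamiltonian. apply/matrixP => i j; rewrite !mxE; rewrite ?big_ord_recr ?big_ord0 /= ?mxE;
  case: i => [[|[|[|[|[|[|//]]]]]] hi]; case: j => [[|[|[|[|[|[|//]]]]]] hj] /=;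
  rewrite ?mulr0 ?mul0r ?mulr1 ?mul1r ?add0r ?addr0 ?mulrN ?mulNr ?opprK ?oppr0 //. Qed.

Lemma A0_2 : A0 ^+ 2 = M2.
Proof. rewrite expr2 -mmE. apply/matrixP => i j; rewrite !mxE; rewrite ?big_ord_recr ?big_ord0 /= ?mxE;
  case: i => [[|[|[|[|[|[|//]]]]]] hi]; case: j => [[|[|[|[|[|[|//]]]]]] hj] /=;
  rewrite ?mulr0 ?mul0r ?mulr1 ?mul1r ?add0r ?addr0 ?mulrN ?mulNr ?opprK ?oppr0 //. Qed.

Lemma A0_3 : A0 ^+ 3 = 0.
Proof. rewrite exprSr A0_2 -mmE. apply/matrixP => i j; rewrite !mxE; rewrite ?big_ord_recr ?big_ord0 /= ?mxE;
  case: i => [[|[|[|[|[|[|//]]]]]] hi]; case: j => [[|[|[|[|[|[|//]]]]]] hj] /=;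
  rewrite ?mulr0 ?mul0r ?mulr1 ?mul1r ?add0r ?addr0 ?mulrN ?mulNr ?opprK ?oppr0 //. Qed.


Lemma A0_4 : A0 ^+ 4 = 0.
Proof. by rewrite exprSr A0_3 mul0r. Qed.

Definition sg (p : nat) : nat := if p == 3%N then 5%N else if p == 5%N then 3%N else p.
Definition MW : 'M[R]_6 := \matrix_(i, p) (((i : nat) == sg p) : nat)%:R.
Definition MH : 'M[R]_3 := \matrix_(i, j) (((i + j)%N == 2%N) : nat)%:R.

Lemma WA0 : Wfun A0 = MW.
Proof.
apply/matrixP => i p; rewrite !mxE.
case: p => [[|[|[|[|[|[|//]]]]]] hp] /=; rewrite /fidx /= ?expr0 ?expr1 ?A0_2 !mxE;
case: i => [[|[|[|[|[|[|//]]]]]] hi] //=.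
Qed.

Lemma HA0 : Hfun A0 = MH.
Proof.
apply/matrixP => i j; rewrite !mxE.
case: i => [[|[|[|//]]] hi]; case: j => [[|[|[|//]]] hj] /=;
rewrite ?expr0 ?expr1 ?A0_2 ?A0_3 ?A0_4 !mxE //=.
Qed.

Lemma MW2 : MW *m MW = 1%:M.
Proof.
apply/matrixP => i j; rewrite !mxE; rewrite ?big_ord_recr ?big_ord0 /= ?mxE;
  case: i => [[|[|[|[|[|[|//]]]]]] hi]; case: j => [[|[|[|[|[|[|//]]]]]] hj] /=;
  rewrite ?mulr0 ?mul0r ?mulr1 ?mul1r ?add0r ?addr0 //.
Qed.

Lemma MH2 : MH *m MH = 1%:M.
Proof.
apply/matrixP => i j; rewrite !mxE; rewrite ?big_ord_recr ?big_ord0 /= ?mxE;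
  case: i => [[|[|[|//]]] hi]; case: j => [[|[|[|//]]] hj] /=;
  rewrite ?mulr0 ?mul0r ?mulr1 ?mul1r ?add0r ?addr0 //.
Qed.

Lemma det_sq_neq0 n (X : 'M[R]_n) : X *m X = 1%:M -> \det X != 0.
Proof.
move=> h; apply/eqP => h0; have := congr1 determinant h.
by rewrite det_mulmx h0 mul0r det1 => /eqP; rewrite eq_sym oner_eq0.
Qed.

Lemma P_A0 : mxpeval (Ppoly R) A0 != 0.
Proof.
rewrite ev_P WA0 HA0 mulf_neq0 //; apply: det_sq_neq0; [exact: MW2 | exact: MH2].
Qed.

End A0S.

Section MainS.
Variable R : realFieldType.
Notation tens := ('I_6 -> 'I_6 -> 'I_6 -> R).

Lemma tri_ext (T1 T2 : tens) u v w : (forall i j k, T1 i j k = T2 i j k) ->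
  tri T1 u v w = tri T2 u v w.
Proof.
move=> h; apply: eq_bigr => i _; apply: eq_bigr => j _; apply: eq_bigr => k _.
by rewrite h.
Qed.

Lemma tri_sub (T1 T2 : tens) u v w :
  tri (fun i j k => T1 i j k - T2 i j k) u v w = tri T1 u v w - tri T2 u v w.
Proof.
rewrite /tri -sumrB; apply: eq_bigr => i _; rewrite -sumrB; apply: eq_bigr => j _.
rewrite -sumrB; apply: eq_bigr => k _; by rewrite mulrBl.
Qed.

Lemma tri0 u v w : tri (fun _ _ _ => 0 : R) u v w = 0.
Proof.
rewrite /tri big1 // => i _; rewrite big1 // => j _; rewrite big1 // => k _.
by rewrite mul0r.
Qed.

Lemma Polyt0 (T : tens) : (forall i j k, T i j k = 0) -> Polyt T = 0.
Proof.
move=> h; rewrite /Polyt big1 // => i _; rewrite big1 // => j _; rewrite big1 // => k _.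
by rewrite h mul0r scale0r.
Qed.

Lemma sum_delta (c : 'I_12 -> R) k : \sum_l c l * (k == l)%:R = c k.
Proof.
rewrite (bigD1 k) //= eqxx mulr1 big1 ?addr0 // => l hl.
by rewrite eq_sym (negPf hl) mulr0.
Qed.

End MainS.

Theorem mainTheorem2 (R : realFieldType) :
  exists P : mxpoly36 R,
    (exists A0 : 'M[R]_6, skew_hamiltonian A0 /\ mxpeval P A0 != 0) /\
    (forall A : 'M[R]_6, skew_hamiltonian A -> mxpeval P A != 0 ->
       has_dim (V := poly6 R) (sol_space A) 12).
Proof.
exists (Ppoly R); split.
  by exists (A0 R); split; [exact: A0_sh | exact: P_A0].
move=> A hA hP.
have [hdW hdH] : \det (Wfun A) != 0 /\ \det (Hfun A) != 0.
  by move: hP; rewrite ev_P mulf_eq0 negb_or => /andP.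
have hW : Wm A^T \in unitmx by rewrite Wm_Wfun unitmxE unitfE.
have hH : Hm A \in unitmx by rewrite Hm_Hfun unitmxE unitfE.
have [c0 [c1 [c2 hR]]] := Rel_of hA hW hH.
pose b k := Polyt (Tk A^T c0 c1 c2 k).
have ellc (c : 'I_12 -> R) k :
    ell A^T (fun i1 i2 i3 => \sum_l c l * Tk A^T c0 c1 c2 l i1 i2 i3) k = c k.
  transitivity (\sum_l c l * ell A^T (Tk A^T c0 c1 c2 l) k); first by rewrite /ell tri_lin_tens.
  under eq_bigr do rewrite ell_Tk //.
  exact: sum_delta.
have TtS (c : 'I_12 -> R) i1 i2 i3 :
    Tt (\sum_k c k *: b k) i1 i2 i3 = \sum_l c l * Tk A^T c0 c1 c2 l i1 i2 i3.
  by rewrite Tt_sum; apply: eq_bigr => l _; rewrite Tt_Polyt //; apply: Tc_sym.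
exists b; split.
  move=> c hc k.
  have hT i1 i2 i3 : \sum_l c l * Tk A^T c0 c1 c2 l i1 i2 i3 = 0.
    by rewrite -TtS hc TtE ffunE mul0rn.
  rewrite -(ellc c k) /ell (tri_ext _ _ _ hT).
  exact: tri0.
move=> v; rewrite sol_spaceE; split.
  move=> [h3 hc].
  have hm : movable A^T (Tt v) by apply: cond_movable; exact: hc.
  exists (fun k => ell A^T (Tt v) k).
  set G := v - \sum_k ell A^T (Tt v) k *: b k.
  suff hG : G = 0 by apply/eqP; rewrite -subr_eq0; apply/eqP.
  pose T' := fun i j k => Tt v i j k - \sum_l ell A^T (Tt v) l * Tk A^T c0 c1 c2 l i j k.
  have eT i j k : Tt G i j k = T' i j k by rewrite Tt_sub TtS.
  have h3G : homog3 G.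
    move=> m hm'; rewrite /G !ffunE sum_ffunE h3 // sub0r big1 ?oppr0 // => k _.
    by rewrite ffunE /b Polyt_hom // scaler0.
  have T'0 : forall i j k, T' i j k = 0.
    apply: (uniq_T hW hR).
    - move=> i j k; rewrite /T'; have [s1 s2] := Tt_sym v i j k; split.
        rewrite s1; congr (_ - _); apply: eq_bigr => l _.
        by rewrite /Tk (proj1 (Tc_sym _ _ _ _ _ _ _ _ _)).
      rewrite s2; congr (_ - _); apply: eq_bigr => l _.
      by rewrite /Tk (proj2 (Tc_sym _ _ _ _ _ _ _ _ _)).
    - move=> u v' w; rewrite !tri_sub !tri_lin_tens hm; congr (_ - _).
      by apply: eq_bigr => l _; rewrite (Tc_mov hR hW).
    - move=> k; have := ellc (fun l => ell A^T (Tt v) l) k.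
      by rewrite /ell tri_sub => ->; rewrite subrr.
  rewrite -(Polyt_Tt h3G); apply: Polyt0 => i j k.
  by rewrite eT T'0.
move=> [c ->]; split.
  move=> m hm; rewrite sum_ffunE big1 // => k _.
  by rewrite ffunE /b Polyt_hom // scaler0.
have hcond : condA A (Tt (\sum_k c k *: b k)).
  apply: movable_cond => u v' w.
  rewrite !(tri_ext _ _ _ (TtS c)) !tri_lin_tens.
  by apply: eq_bigr => l _; rewrite (Tc_mov hR hW).
exact: hcond.
Qed.
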